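(* Let $(X,m)$ be a configuration of particles with $X=\{x_1,\ldots,x_n\}\subset\mathbb{R}^N$ distinct points, nonzero masses $m_i$, total mass $\mu_0=\sum_i m_i\neq0$, and exponent $a\in\mathbb{R}\setminus\{0\}$. Then $(X,m)$ is a central configuration if and only if there exists $\lambda\in\mathbb{R}$ such that, with $S_{ij}=s_{ij}^a-\lambda/\mu_0$, each weighted system $(X,C_j)$, $j=1,\ldots,n$, defined by $C_j(x_i)=m_iS_{ij}$ for $i\neq j$ and $C_j(x_j)=-\sum_{i\neq j}m_iS_{ij}$, has identically zero first moment.
   Context: $s_{ij}=\overrightarrow{x_ix_j}^2$. The accelerations are $\overrightarrow{\gamma}_j=-\sum_{i\neq j}m_is_{ij}^a\overrightarrow{x_ix_j}$. $(X,m)$ is a central configuration if there exist a vector $\overrightarrow{\gamma}_O$, a point $x_O$ and a real number $\lambda$ with $\overrightarrow{\gamma}_j-\overrightarrow{\gamma}_O=\lambda\overrightarrow{x_Ox_j}$ for all $j$. The first moment of a weighted system $(X,w)$ is $\mu_1(p)=\sum_iw(x_i)\overrightarrow{px_i}$. *)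

(* Defs.v *)
From HB Require Import structures.
From mathcomp Require Import all_boot all_order all_algebra.
From mathcomp Require Import reals exp.
Set Implicit Arguments. Unset Strict Implicit. Unset Printing Implicit Defensive.
Import Order.TTheory GRing.Theory Num.Theory.
Local Open Scope ring_scope.

(* Points of R^N are row vectors 'rV[R]_N; the configuration is x : 'I_n -> 'rV_N,
   the vector x_i x_j is x j - x i. *)
Section Defs.
Variables (R : realType) (N n : nat).

Definition vecxy (p q : 'rV[R]_N) : 'rV[R]_N := q - p.

Definition sqn (v : 'rV[R]_N) : R := \sum_(k < N) v ord0 k ^+ 2.

Definition s_ (x : 'I_n -> 'rV[R]_N) (i j : 'I_n) : R := sqn (vecxy (x i) (x j)).

Definition accel (a : R) (x : 'I_n -> 'rV[R]_N) (m : 'I_n -> R) (j : 'I_n)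
  : 'rV[R]_N :=
  - \sum_(i < n | i != j) (m i * powR (s_ x i j) a) *: vecxy (x i) (x j).

Definition central_configuration (a : R) (x : 'I_n -> 'rV[R]_N) (m : 'I_n -> R)
  : Prop :=
  exists (gO xO : 'rV[R]_N) (lam : R),
    forall j, accel a x m j - gO = lam *: vecxy xO (x j).

Definition first_moment (x : 'I_n -> 'rV[R]_N) (w : 'I_n -> R) (p : 'rV[R]_N)
  : 'rV[R]_N := \sum_(i < n) w i *: vecxy p (x i).

Definition total_mass (m : 'I_n -> R) : R := \sum_(i < n) m i.

Definition S_ (a lam : R) (x : 'I_n -> 'rV[R]_N) (m : 'I_n -> R) (i j : 'I_n) : R :=
  powR (s_ x i j) a - lam / total_mass m.

Definition C_ (a lam : R) (x : 'I_n -> 'rV[R]_N) (m : 'I_n -> R) (j : 'I_n)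
  (i : 'I_n) : R :=
  if i != j then m i * S_ a lam x m i j
  else - \sum_(k < n | k != j) m k * S_ a lam x m k j.
End Defs.

(* Main.v *)
Require Import Defs.
From HB Require Import structures.
From mathcomp Require Import all_boot all_order all_algebra.
From mathcomp Require Import reals exp.
From mathcomp Require Import ring lra.
Import Order.TTheory GRing.Theory Num.Theory.
Local Open Scope ring_scope.

Section Aux.
Variables (R : realType) (N n : nat) (x : 'I_n -> 'rV[R]_N) (m : 'I_n -> R) (a : R).

Lemma accel_all j : accel a x m j =
  \sum_i (m i * powR (s_ x i j) a) *: (x i - x j).
Proof.
rewrite /accel -sumrN [RHS](bigD1 j) //= subrr scaler0 add0r.
by apply: eq_bigr => i _; rewrite /vecxy -scalerN opprB.
Qed.

Definition Sig := \sum_i m i *: x i.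

Lemma sum_ne (c : R) j : \sum_(i | i != j) (m i * c) *: (x i - x j)
  = c *: (Sig - total_mass m *: x j).
Proof.
transitivity (\sum_i (m i * c) *: (x i - x j)).
  by rewrite [RHS](bigD1 j) //= subrr scaler0 add0r.
rewrite /Sig /total_mass scaler_suml -sumrB scaler_sumr.
by apply: eq_bigr => i _; rewrite -scalerBr scalerA mulrC.
Qed.

Lemma FM lam j p : total_mass m != 0 ->
  first_moment x (C_ a lam x m j) p =
  accel a x m j - (lam / total_mass m) *: Sig + lam *: x j.
Proof.
move=> hmu.
rewrite /first_moment (bigD1 j) //= /C_ eqxx /=.
rewrite (eq_bigr (fun i => (m i * S_ a lam x m i j) *: vecxy p (x i))); last by move=> i ->.
rewrite scaleNr scaler_suml -sumrN -big_split /=.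
under eq_bigr => i _ do
  rewrite /vecxy -scalerN -scalerDr opprB addrC addrA subrK.
under eq_bigr => i _ do rewrite /S_ mulrBr scalerBl.
rewrite sumrB sum_ne accel_all [X in _ = X - _ + _](bigD1 j) //= subrr scaler0 add0r.
by rewrite scalerBr scalerA divfK // opprB addrA addrAC.
Qed.

Lemma momentum : \sum_j m j *: accel a x m j = 0.
Proof.
set T := \sum_j _.
have sym i j : s_ x i j = s_ x j i.
  rewrite /s_ /sqn /vecxy; apply: eq_bigr => k _.
  by rewrite -opprB !mxE sqrrN.
have HT : T = - T.
  rewrite {1}/T.
  under eq_bigr => j _ do rewrite accel_all scaler_sumr.
  rewrite exchange_big /T -sumrN; apply: eq_bigr => i _.
  rewrite accel_all scaler_sumr -sumrN; apply: eq_bigr => j _.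
  rewrite !scalerA sym -scalerN opprB; congr (_ *: _).
  by rewrite mulrCA mulrA.
have : (2%:R : R) *: T = 0 by rewrite scaler_nat mulr2n {1}HT addNr.
by move/eqP; rewrite scaler_eq0 pnatr_eq0 /= => /eqP.
Qed.
End Aux.

Theorem theorem5p2 (R : realType) (N n : nat) (x : 'I_n -> 'rV[R]_N)
  (m : 'I_n -> R) (a : R)
  (hx : injective x) (hm : forall i, m i != 0)
  (hmu : total_mass m != 0) (ha : a != 0) :
  central_configuration a x m <->
  exists lam : R, forall (j : 'I_n) (p : 'rV[R]_N),
    first_moment x (C_ a lam x m j) p = 0.
Proof.
split.
- move=> [gO [xO [l H]]].
  exists (- l) => j p; rewrite FM //.
  have Hj k : accel a x m k = gO + l *: (x k - xO).
    by rewrite -(H k) /vecxy addrC subrK.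
  have M := @momentum R N n x m a.
  have M' : total_mass m *: gO + l *: (@Sig R N n x m - total_mass m *: xO) = 0.
    rewrite -M; under eq_bigr => k _ do rewrite Hj scalerDr.
    rewrite big_split /= -scaler_suml; congr (_ + _).
    under eq_bigr => k _ do rewrite scalerA mulrC -scalerA.
    rewrite -scaler_sumr; congr (_ *: _).
    by rewrite /Sig /total_mass scaler_suml -sumrB; apply: eq_bigr => i _; rewrite scalerBr.
  rewrite Hj; apply/rowP => k.
  have Mk := congr1 (fun v : 'rV[R]_N => v ord0 k) M'.
  rewrite /= !mxE in Mk *.
  apply: (mulfI hmu); rewrite mulr0 -[RHS]Mk.
  by field.
- move=> [lam H].
  exists 0, ((total_mass m)^-1 *: @Sig R N n x m), (- lam) => j.
  have := H j 0; rewrite FM // => Ek.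
  apply/rowP => k.
  have Ek' := congr1 (fun v : 'rV[R]_N => v ord0 k) Ek.
  rewrite /vecxy /= !mxE in Ek' *.
  apply/eqP; rewrite -subr_eq0; apply/eqP; rewrite -[RHS]Ek'.
  by field.
Qed.
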